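(* Assume $\theta_i<1$ for all $i$ and $\theta_j>0$ for some $j$. Then $\mathbf 1_n/n$ is an equilibrium social power of systems (A) and (B) (i.e. $F(\mathbf 1_n/n)=\mathbf 1_n/n$) if and only if $\Theta(I_n-\Theta)^{-1}\mathbf 1_n$ is a left eigenvector of $C$ with eigenvalue $1$, i.e. $C^T\Theta(I_n-\Theta)^{-1}\mathbf 1_n=\Theta(I_n-\Theta)^{-1}\mathbf 1_n$.
   Context: Let $n\ge 2$, $\mathbf 1_n$ the all-ones vector, $I_n$ the identity matrix, $\Delta_n=\{x\in\mathbb R^n: x\ge 0,\ \mathbf 1_n^Tx=1\}$. Let $C\in\mathbb R^{n\times n}$ be a nonnegative row-stochastic matrix with zero diagonal, $\theta=(\theta_1,\dots,\theta_n)\in[0,1]^n$, $\Theta=\mathrm{diag}(\theta)$, and for $x\in\mathbb R^n$, $W(x)=\mathrm{diag}(x)+(I_n-\mathrm{diag}(x))C$. System (A): $x(s+1)=F(x(s))$, $x(0)\in\Delta_n$, where $F(x)=(I_n-\Theta)(I_n-W(x)^T\Theta)^{-1}\mathbf 1_n/n$; an equilibrium is $x^*\in\Delta_n$ with $F(x^* )=x^*$. System (B): $V(k+1)=\Theta W(x(k))V(k)+I_n-\Theta$, $x(k+1)=V(k+1)^T\mathbf 1_n/n$, with $V(0)=I_n$, $x(0)\in\Delta_n$; an equilibrium is a pair $(V^*,x^* )$ with $V^*$ row-stochastic, $x^*\in\Delta_n$, $V^*=\Theta W(x^* )V^*+I_n-\Theta$, $x^*=(V^* )^T\mathbf 1_n/n$.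 The equilibrium social powers of (A) and (B) coincide (the fixed points of $F$). *)

(* Defs.v *)
From HB Require Import structures.
From mathcomp Require Import all_boot all_order all_algebra.
Set Implicit Arguments. Unset Strict Implicit. Unset Printing Implicit Defensive.
Import Order.TTheory GRing.Theory Num.Theory.
Local Open Scope ring_scope.

Definition ones (R : ringType) (n : nat) : 'cV[R]_n := const_mx 1.

Definition unif (R : fieldType) (n : nat) : 'cV[R]_n := (n%:R)^-1 *: ones R n.

Definition diagc (R : ringType) (n : nat) (x : 'cV[R]_n) : 'M[R]_n :=
  diag_mx x^T.

Definition Wmat (R : ringType) (n : nat) (C : 'M[R]_n) (x : 'cV[R]_n) : 'M[R]_n :=
  diagc x + (1%:M - diagc x) *m C.

Definition Fmap (R : fieldType) (n : nat) (C : 'M[R]_n) (theta : 'cV[R]_n)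
  (x : 'cV[R]_n) : 'cV[R]_n :=
  (1%:M - diagc theta) *m invmx (1%:M - (Wmat C x)^T *m diagc theta) *m unif R n.

Definition admissible_C (R : numDomainType) (n : nat) (C : 'M[R]_n) : Prop :=
  (forall i j, 0 <= C i j) /\
  (forall i, \sum_j C i j = 1) /\
  (forall i, C i i = 0).

(* Main.v *)
Require Import Defs.
From HB Require Import structures.
From mathcomp Require Import all_boot all_order all_algebra.
Import Order.TTheory GRing.Theory Num.Theory.
Local Open Scope ring_scope.

Lemma diagc_unif (R : fieldType) n : diagc (unif R n) = (n%:R^-1)%:M.
Proof. by apply/matrixP => i j; rewrite !mxE mulr1. Qed.

Lemma W_unif (R : fieldType) n (C : 'M[R]_n) :
  Wmat C (unif R n) = (n%:R^-1)%:M + (1 - n%:R^-1) *: C.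
Proof.
by rewrite /Wmat diagc_unif -(raddfB (@scalar_mx R n)) mul_scalar_mx.
Qed.

Lemma T_unit (R : realFieldType) n (theta : 'cV[R]_n) :
  (forall i, theta i 0 < 1) -> (1%:M - diagc theta) \in unitmx.
Proof.
move=> h1.
have -> : 1%:M - diagc theta = diag_mx (\row_i (1 - theta i 0)).
  by apply/matrixP => i j; rewrite !mxE; case: (i == j); rewrite ?mulr1n ?mulr0n ?subr0.
rewrite unitmxE det_diag unitfE; apply/prodf_neq0 => i _.
by rewrite mxE subr_eq0 eq_sym (lt_eqF (h1 i)).
Qed.

Lemma M_unit (R : realFieldType) n (W : 'M[R]_n) (theta : 'cV[R]_n) (j0 : 'I_n) :
  (forall i k, 0 <= W i k) -> (forall i, \sum_k W i k = 1) ->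
  (forall i, 0 <= theta i 0) -> (forall i, theta i 0 < 1) ->
  (1%:M - W^T *m diagc theta) \in unitmx.
Proof.
move=> W0 W1 t0 t1.
rewrite -row_free_unit -kermx_eq0.
case: (eqVneq (kermx (1%:M - W^T *m diagc theta)) 0) => // /rowV0Pn [v /sub_kermxP hv vnz].
exfalso; move: vnz; apply/negP; rewrite negbK.
move: hv; rewrite mulmxBr mulmx1 mulmxA => /eqP; rewrite subr_eq0 => /eqP hv.
have he j : v 0 j = (\sum_k v 0 k * W j k) * theta j 0.
  by rewrite {1}hv /diagc mul_mx_diag !mxE; congr (_ * _); apply: eq_bigr => k _; rewrite mxE.
case: (@Order.TotalTheory.arg_maxP _ R _ j0 xpredT (fun i => `|v 0 i|) isT) => i _ hi.
have key : `|v 0 i| <= 0.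
  have h1 : `|v 0 i| <= theta i 0 * `|v 0 i|.
    rewrite {1}he normrM (ger0_norm (t0 i)) mulrC ler_wpM2l //.
    apply: le_trans (ler_norm_sum _ _ _) _.
    rewrite -[leRHS]mulr1 -(W1 i) mulr_sumr; apply: ler_sum => k _.
    rewrite normrM (ger0_norm (W0 i k)).
    apply: ler_wpM2r; first exact: W0. exact: (hi k isT).
  have : (1 - theta i 0) * `|v 0 i| <= 0 by rewrite mulrBl mul1r subr_le0.
  by rewrite pmulr_rle0 // subr_gt0.
apply/eqP/matrixP => a k; rewrite mxE [a]ord1.
by apply/eqP; rewrite -normr_le0 (le_trans (hi k isT)).
Qed.

Theorem corollary2 (R : realFieldType) (n : nat) (C : 'M[R]_n) (theta : 'cV[R]_n) :
  (2 <= n)%N ->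
  admissible_C C ->
  (forall i, 0 <= theta i 0 <= 1) ->
  (forall i, theta i 0 < 1) ->
  (exists j, 0 < theta j 0) ->
  (Fmap C theta (unif R n) = unif R n <->
   C^T *m (diagc theta *m invmx (1%:M - diagc theta) *m ones R n)
   = diagc theta *m invmx (1%:M - diagc theta) *m ones R n).
Proof.
move=> n2 [C0 [C1 _]] t01 t1 [j0 _].
set a : R := n%:R^-1.
have nz : n%:R != 0 :> R by rewrite pnatr_eq0 -lt0n (leq_trans _ n2).
have a0 : 0 < a by rewrite invr_gt0 ltr0n lt0n -(pnatr_eq0 R).
have a1 : a <= 1 by rewrite invf_le1 ?ler1n ?(leq_trans _ n2) // ltr0n lt0n -(pnatr_eq0 R).
have a1' : 1 - a != 0.
  rewrite subr_eq0 eq_sym; apply/eqP => h.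
  have : n%:R = 1 :> R by rewrite -[n%:R]invrK -/a h invr1.
  by move/eqP; rewrite pnatr_eq1 => /eqP e; rewrite e in n2.
have hW : Wmat C (unif R n) = a%:M + (1 - a) *: C by rewrite W_unif.
set W := Wmat C (unif R n) in hW *.
have W0 i k : 0 <= W i k.
  rewrite hW !mxE; apply: addr_ge0; first by rewrite mulrn_wge0 // ltW.
  by rewrite mulr_ge0 // subr_ge0.
have W1 i : \sum_k W i k = 1.
  rewrite hW; under eq_bigr => k _ do rewrite !mxE.
  rewrite big_split /= -mulr_sumr C1 mulr1 (bigD1 i) //= eqxx mulr1n big1 ?addr0.
    by rewrite addrC subrK.
  by move=> k /negbTE; rewrite eq_sym => ->; rewrite mulr0n.
have Tu := @T_unit R n theta t1.
have Mu := @M_unit R n W theta j0 W0 W1 (fun i => proj1 (andP (t01 i))) t1.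
set T := 1%:M - diagc theta in Tu *.
set M := 1%:M - W^T *m diagc theta in Mu.
set one := ones R n.
set y := invmx T *m one.
set z := diagc theta *m invmx T *m one.
have hz : z = diagc theta *m y by rewrite /z -mulmxA.
have Ty : T *m y = one by rewrite /y mulmxA mulmxV // mul1mx.
have hy : y = one + z.
  move: Ty.
  by rewrite hz /T mulmxBl mul1mx => <-; rewrite subrK.
have hu : unif R n = a *: one by [].
have E : M *m y - one = (1 - a) *: (z - C^T *m z).
  rewrite /M mulmxBl mul1mx -mulmxA -hz hW linearD /= tr_scalar_mx linearZ /=.
  rewrite mulmxDl mul_scalar_mx -scalemxAl hy.
  by rewrite addrAC (addrC one) addrK scalerBr opprD addrA !scalerBl !scale1r.
have step2 : C^T *m z = z <-> M *m y = one.
  split=> h.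
    by apply/eqP; rewrite -subr_eq0 E h subrr scaler0.
  apply/eqP; rewrite eq_sym -subr_eq0; move/eqP: h.
  by rewrite -subr_eq0 E scaler_eq0 (negbTE a1').
apply: (iff_trans _ (iff_sym step2)); rewrite /Fmap -/W -/T -/M hu.
have an0 : a != 0 by rewrite gt_eqF.
split=> h.
  have h2 : invmx M *m (a *: one) = a *: y.
    have := congr1 (fun v => invmx T *m v) h; rewrite /= -mulmxA => e; rewrite -[LHS]mul1mx -(mulVmx Tu) -mulmxA e.
    by rewrite scalemxAr.
  have := congr1 (fun v => a^-1 *: (M *m v)) h2.
  rewrite /= mulmxA mulmxV // mul1mx -scalemxAr !scalerA mulVf // !scale1r.
  by move=> <-.
have h2 : invmx M *m one = y.
  by rewrite -h mulmxA mulVmx // mul1mx.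
by rewrite -mulmxA -scalemxAr h2 -scalemxAr Ty.
Qed.
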